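(* Let $\mathfrak{P}$ be a compactness-like topological property, let $X$ be a space, let $Y$ be an extension of $X$ with compact remainder, let $\zeta Y$ be a compactification of $Y$, and let $\phi:\beta X\to\zeta Y$ be the continuous extension of the identity of $X$. Then $Y\in\mathscr{E}_\mathfrak{P}(X)$ if and only if $X$ is locally-$\mathfrak{P}$ and $\beta X\setminus\lambda_\mathfrak{P}X\subseteq\phi^{-1}[Y\setminus X]$.
   Context: All spaces are completely regular Hausdorff; $\beta X$ is the Stone–Čech compactification. An extension of $X$ is a space containing $X$ as a dense subspace; its remainder is $Y\setminus X$. $\mathscr{E}_\mathfrak{P}(X)$ is the set of all extensions of $X$ with $\mathfrak{P}$ and compact remainder. $X$ is locally-$\mathfrak{P}$ if each point has an open neighborhood whose closure has $\mathfrak{P}$. $\mathrm{Coz}(X)$ is the set of cozero-sets of $X$. $\lambda_\mathfrak{P}X=\bigcup\{\mathrm{int}_{\beta X}\mathrm{cl}_{\beta X}C: C\in\mathrm{Coz}(X),\ \mathrm{cl}_XC\text{ has }\mathfrak{P}\}$. A topological property is compactness-like if it is hereditary to clopen subspaces, finitely additive (finite disjoint unions of closed subspaces with $\mathfrak{P}$ have $\mathfrak{P}$), invariant and inverse invariant under perfect surjections (closed continuous surjections with compact fibers), and satisfies Mrówka's condition (W): if a space $Z$ has a point $p$ with an open base $\mathscr{B}$ at $p$ such that $Z\setminus B$ has $\mathfrak{P}$ for all $B\in\mathscr{B}$, then $Z$ has $\mathfrak{P}$. *)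

(* Defs.v *)
From Stdlib Require Import Reals List.
Open Scope R_scope.

Definition set (T : Type) := T -> Prop.

Record space := Space {
  carrier :> Type;
  open : set carrier -> Prop;
  open_setT : open (fun _ => True);
  open_setI : forall U V, open U -> open V -> open (fun x => U x /\ V x);
  open_bigU : forall F : set (set carrier),
      (forall U, F U -> open U) -> open (fun x => exists U, F U /\ U x)
}.
Arguments open {s} _.

Section Subspace.
Variables (S : space) (A : set S).
Definition sub_open (U : set {x : S | A x}) : Prop :=
  exists V : set S, open V /\ forall x, U x <-> V (proj1_sig x).

Lemma sub_open_setT : sub_open (fun _ => True).
Proof. exists (fun _ => True); split; [apply open_setT | tauto]. Qed.

Lemma sub_open_setI U V : sub_open U -> sub_open V -> sub_open (fun x => U x /\ V x).
Proof.
  intros [U' [HU HU']] [V' [HV HV']]. exists (fun x => U' x /\ V' x).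
  split; [apply open_setI; auto|]. intros x; rewrite HU', HV'; tauto.
Qed.

Lemma sub_open_bigU (F : set (set {x : S | A x})) :
  (forall U, F U -> sub_open U) -> sub_open (fun x => exists U, F U /\ U x).
Proof.
  intros HF.
  exists (fun y => exists V, (open V /\ exists U, F U /\ forall x, U x <-> V (proj1_sig x)) /\ V y).
  split.
  - apply open_bigU. intros V [HV _]; exact HV.
  - intros x; split.
    + intros [U [FU Ux]]. destruct (HF U FU) as [V [HV HUV]].
      exists V; split; [split; [exact HV| exists U; auto] | apply HUV; exact Ux].
    + intros [V [[HV [U [FU HUV]]] Vx]]. exists U; split; [exact FU | apply HUV; exact Vx].
Qed.

Definition subspace : space :=
  Space {x : S | A x} sub_open sub_open_setT sub_open_setI sub_open_bigU.
End Subspace.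

Section Notions.
Definition complement {T} (A : set T) : set T := fun x => ~ A x.
Definition image {S T : Type} (f : S -> T) (A : set S) : set T :=
  fun y => exists x, A x /\ f x = y.

Definition closed {S : space} (C : set S) : Prop := open (complement C).
Definition closure {S : space} (A : set S) : set S :=
  fun x => forall C, closed C -> (forall y, A y -> C y) -> C x.
Definition interior {S : space} (A : set S) : set S :=
  fun x => exists U, open U /\ U x /\ forall y, U y -> A y.
Definition dense {S : space} (A : set S) : Prop := forall x, closure A x.

Definition continuous {S T : space} (f : S -> T) : Prop :=
  forall U : set T, open U -> open (fun x => U (f x)).

Definition R_open (U : R -> Prop) : Prop :=
  forall x, U x -> exists e, 0 < e /\ forall y, Rabs (y - x) < e -> U y.
Definition continuous_R {S : space} (f : S -> R) : Prop :=
  forall U, R_open U -> open (fun x => U (f x)).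

Definition compact (S : space) : Prop :=
  forall F : set (set S), (forall U, F U -> open U) ->
    (forall x, exists U, F U /\ U x) ->
    exists l : list (set S), (forall U, In U l -> F U) /\
      (forall x, exists U, In U l /\ U x).

Definition hausdorff (S : space) : Prop :=
  forall x y : S, x <> y -> exists U V, open U /\ open V /\ U x /\ V y /\
    forall z, ~ (U z /\ V z).

Definition completely_regular (S : space) : Prop :=
  forall (C : set S) (x : S), closed C -> ~ C x ->
    exists f : S -> R, continuous_R f /\ f x = 0 /\
      (forall y, C y -> f y = 1) /\ (forall y, 0 <= f y <= 1).

(* "space" in the paper = completely regular Hausdorff space *)
Definition tychonoff (S : space) : Prop := hausdorff S /\ completely_regular S.

Definition embedding {S T : space} (f : S -> T) : Prop :=
  (forall x y, f x = f y -> x = y) /\ continuous f /\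
  (forall U : set S, open U -> exists V : set T, open V /\ forall x, U x <-> V (f x)).

Definition compactification (Y Z : space) (j : Y -> Z) : Prop :=
  compact Z /\ hausdorff Z /\ embedding j /\ dense (image j (fun _ => True)).

Definition stone_cech (X bX : space) (i : X -> bX) : Prop :=
  compactification X bX i /\
  forall (K : space) (g : X -> K), compact K -> hausdorff K -> continuous g ->
    exists G : bX -> K, continuous G /\ forall x, G (i x) = g x.

Definition property := space -> Prop.

Definition perfect {S T : space} (f : S -> T) : Prop :=
  continuous f /\ (forall C : set S, closed C -> closed (image f C)) /\
  (forall y, exists x, f x = y) /\
  (forall y, compact (subspace S (fun x => f x = y))).

Definition compactness_like (P : property) : Prop :=
  (forall (S : space) (A : set S), tychonoff S -> open A -> closed A ->
      P S -> P (subspace S A)) /\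
  (forall (S : space) (n : nat) (F : nat -> set S), tychonoff S ->
      (forall k, (k < n)%nat -> closed (F k) /\ P (subspace S (F k))) ->
      (forall k l x, (k < n)%nat -> (l < n)%nat -> k <> l -> F k x -> F l x -> False) ->
      (forall x, exists k, (k < n)%nat /\ F k x) ->
      P S) /\
  (forall (S T : space) (f : S -> T), tychonoff S -> tychonoff T ->
      perfect f -> P S -> P T) /\
  (forall (S T : space) (f : S -> T), tychonoff S -> tychonoff T ->
      perfect f -> P T -> P S) /\
  (* Mrowka's condition (W) *)
  (forall (Z : space) (p : Z) (B : set (set Z)), tychonoff Z ->
      (forall U, B U -> open U /\ U p) ->
      (forall V, open V -> V p -> exists U, B U /\ forall z, U z -> V z) ->
      (forall U, B U -> P (subspace Z (complement U))) ->
      P Z).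

Definition locally (P : property) (X : space) : Prop :=
  forall x : X, exists U : set X, open U /\ U x /\ P (subspace X (closure U)).

Definition cozero {X : space} (C : set X) : Prop :=
  exists f : X -> R, continuous_R f /\ forall x, C x <-> f x <> 0.

(* lambda_P X, as a subset of bX, where i : X -> bX is the Stone-Cech embedding *)
Definition lambdaP (P : property) (X bX : space) (i : X -> bX) : set bX :=
  fun p => exists C : set X, cozero C /\ P (subspace X (closure C)) /\
    interior (closure (image i C)) p.

(* Y (containing X as the subset Xs) belongs to E_P(X):
   Y is an extension of X with P and compact remainder *)
Definition in_EP (P : property) (Y : space) (Xs : set Y) : Prop :=
  dense Xs /\ P Y /\ compact (subspace Y (complement Xs)).
End Notions.

(* Main.v *)
From Pilot Require Import Defs.
From Stdlib Require Import Reals Lra Lia List Classical FunctionalExtensionality PropExtensionality ProofIrrelevance ClassicalEpsilon.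
Open Scope R_scope.
Import Pilot.Defs.

Lemma set_ext {T} (A B : set T) : (forall x, A x <-> B x) -> A = B.
Proof. intros H; apply functional_extensionality; intros x; apply propositional_extensionality; auto. Qed.

Lemma open_ext {S : space} (A B : set S) : open A -> (forall x, A x <-> B x) -> open B.
Proof. intros HA H; rewrite <- (set_ext A B H); exact HA. Qed.

Lemma open_local {S : space} (A : set S) :
  (forall x, A x -> exists U, open U /\ U x /\ forall y, U y -> A y) -> open A.
Proof.
  intros H.
  apply (open_ext (fun x => exists U, (fun U => open U /\ forall y, U y -> A y) U /\ U x)).
  - apply open_bigU. intros U [HU _]; exact HU.
  - intros x; split.
    + intros [U [[_ HU] Ux]]; auto.
    + intros Ax; destruct (H x Ax) as [U [HU [Ux HUA]]]. exists U; auto.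
Qed.

Lemma open_union2 {S : space} (U V : set S) : open U -> open V -> open (fun x => U x \/ V x).
Proof.
  intros HU HV; apply open_local; intros x [Ux|Vx].
  - exists U; split; auto.
  - exists V; split; auto.
Qed.

Lemma open_empty {S : space} : open (fun _ : S => False).
Proof. apply open_local; intros x []. Qed.

Lemma closure_incl {S : space} (A : set S) x : A x -> closure A x.
Proof. intros Ax C _ HC; auto. Qed.

Lemma closure_closed {S : space} (A : set S) : closed (closure A).
Proof.
  unfold closed; apply open_local; intros x Hx.
  unfold complement, closure in Hx.
  apply not_all_ex_not in Hx; destruct Hx as [C HC].
  apply imply_to_and in HC; destruct HC as [HCc HC].
  apply imply_to_and in HC; destruct HC as [HAC HCx].
  exists (complement C); split; [exact HCc|split; [exact HCx|]].
  intros y Cy Hy; apply Cy; apply Hy; auto.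
Qed.

Lemma closed_complement_open {S : space} (U : set S) : open U -> closed (complement U).
Proof.
  intros HU; unfold closed; apply (open_ext U); auto.
  intros x; unfold complement; split; [tauto| apply NNPP].
Qed.

Lemma continuous_comp {S T W : space} (f : S -> T) (g : T -> W) :
  continuous f -> continuous g -> continuous (fun x => g (f x)).
Proof. intros Hf Hg U HU; apply (Hf _ (Hg _ HU)). Qed.

Lemma continuous_proj {S : space} (A : set S) :
  continuous (fun z : subspace S A => proj1_sig z).
Proof. intros U HU; exists U; split; [exact HU|tauto]. Qed.

Lemma continuous_into_sub {S T : space} (A : set T) (f : S -> subspace T A) :
  continuous (fun x => proj1_sig (f x)) -> continuous f.
Proof.
  intros Hf U [V [HV HUV]].
  apply (open_ext (fun x => V (proj1_sig (f x)))); [apply Hf; exact HV|].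
  intros x; rewrite HUV; tauto.
Qed.

Lemma continuous_R_comp {S T : space} (f : S -> T) (g : T -> R) :
  continuous f -> continuous_R g -> continuous_R (fun x => g (f x)).
Proof. intros Hf Hg U HU; apply (Hf (fun y => U (g y))); apply Hg; exact HU. Qed.

Lemma sig_eq {T} (A : T -> Prop) (x y : {t | A t}) : proj1_sig x = proj1_sig y -> x = y.
Proof.
  destruct x as [x hx], y as [y hy]; simpl; intros ->. f_equal; apply proof_irrelevance.
Qed.

Lemma R_open_ball (a e : R) : R_open (fun y => Rabs (y - a) < e).
Proof.
  intros x Hx. exists (e - Rabs (x - a)); split; [lra|].
  intros y Hy. 
  assert (Rabs (y - a) <= Rabs (y - x) + Rabs (x - a)).
  { replace (y - a) with ((y - x) + (x - a)) by ring. apply Rabs_triang. }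
  lra.
Qed.

Lemma R_open_lt (c : R) : R_open (fun y => y < c).
Proof.
  intros x Hx; exists (c - x); split; [lra|]. intros y Hy.
  apply Rabs_def2 in Hy; lra.
Qed.

Lemma R_open_gt (c : R) : R_open (fun y => c < y).
Proof.
  intros x Hx; exists (x - c); split; [lra|]. intros y Hy.
  apply Rabs_def2 in Hy; lra.
Qed.

Lemma cont_R_const {S : space} (c : R) : continuous_R (fun _ : S => c).
Proof.
  intros U HU; apply open_local; intros x Ux.
  exists (fun _ => True); split; [apply open_setT|]; auto.
Qed.

Lemma cont_R2 {S : space} (f g : S -> R) (h : R -> R -> R) :
  continuous_R f -> continuous_R g ->
  (forall a b e, 0 < e -> exists d, 0 < d /\ forall a' b',
      Rabs (a' - a) < d -> Rabs (b' - b) < d -> Rabs (h a' b' - h a b) < e) ->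
  continuous_R (fun x => h (f x) (g x)).
Proof.
  intros Hf Hg Hh U HU; apply open_local; intros x Ux.
  destruct (HU _ Ux) as [e [He HeU]].
  destruct (Hh (f x) (g x) e He) as [d [Hd Hdd]].
  exists (fun z => Rabs (f z - f x) < d /\ Rabs (g z - g x) < d).
  split; [apply open_setI; [apply (Hf (fun y => Rabs (y - f x) < d)) | apply (Hg (fun y => Rabs (y - g x) < d))]; apply R_open_ball|].
  split.
  - unfold Rminus; rewrite !Rplus_opp_r, Rabs_R0; auto.
  - intros y [H1 H2]; apply HeU; apply Hdd; auto.
Qed.

Lemma Rabs_lt_intro x e : - e < x < e -> Rabs x < e.
Proof. intros; apply Rabs_def1; lra. Qed.

Lemma cont_R_min {S : space} (f g : S -> R) :
  continuous_R f -> continuous_R g -> continuous_R (fun x => Rmin (f x) (g x)).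
Proof.
  intros Hf Hg; apply cont_R2; auto.
  intros a b e He; exists e; split; auto; intros a' b' H1 H2.
  apply Rabs_def2 in H1; apply Rabs_def2 in H2; apply Rabs_lt_intro.
  unfold Rmin; destruct (Rle_dec a' b'), (Rle_dec a b); lra.
Qed.

Lemma cont_R_max {S : space} (f g : S -> R) :
  continuous_R f -> continuous_R g -> continuous_R (fun x => Rmax (f x) (g x)).
Proof.
  intros Hf Hg; apply cont_R2; auto.
  intros a b e He; exists e; split; auto; intros a' b' H1 H2.
  apply Rabs_def2 in H1; apply Rabs_def2 in H2; apply Rabs_lt_intro.
  unfold Rmax; destruct (Rle_dec a' b'), (Rle_dec a b); lra.
Qed.

Lemma cont_R_affine {S : space} (f : S -> R) (a b : R) :
  continuous_R f -> continuous_R (fun x => a * f x + b).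
Proof.
  intros Hf. apply (cont_R2 f f (fun u _ => a * u + b)); auto.
  intros u v e He. exists (e / (Rabs a + 1)); split.
  - apply Rdiv_lt_0_compat; [lra|]. pose proof (Rabs_pos a); lra.
  - intros u' v' H1 _.
    replace (a * u' + b - (a * u + b)) with (a * (u' - u)) by ring.
    rewrite Rabs_mult.
    pose proof (Rabs_pos a). pose proof (Rabs_pos (u' - u)).
    apply Rle_lt_trans with ((Rabs a + 1) * Rabs (u' - u)); [nra|].
    apply Rlt_le_trans with ((Rabs a + 1) * (e / (Rabs a + 1))).
    + apply Rmult_lt_compat_l; lra.
    + right; field; lra.
Qed.

Lemma cont_R_open_lt {S : space} (f : S -> R) c : continuous_R f -> open (fun x => f x < c).
Proof. intros Hf; apply (Hf (fun y => y < c)); apply R_open_lt. Qed.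
Lemma cont_R_open_gt {S : space} (f : S -> R) c : continuous_R f -> open (fun x => c < f x).
Proof. intros Hf; apply (Hf (fun y => c < y)); apply R_open_gt. Qed.
Lemma cont_R_closed_ge {S : space} (f : S -> R) c : continuous_R f -> closed (fun x => c <= f x).
Proof.
  intros Hf; unfold closed; apply (open_ext (fun x => f x < c)); [apply cont_R_open_lt; auto|].
  intros x; unfold complement; lra.
Qed.

Lemma subspace_tych {S : space} (A : set S) : tychonoff S -> tychonoff (subspace S A).
Proof.
  intros [HH HCR]; split.
  - intros x y Hxy.
    assert (proj1_sig x <> proj1_sig y) by (intros E; apply Hxy; apply sig_eq; auto).
    destruct (HH _ _ H) as [U [V [HU [HV [Ux [Vy HUV]]]]]].
    exists (fun z : subspace S A => U (proj1_sig z)), (fun z : subspace S A => V (proj1_sig z)).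
    split; [apply (continuous_proj A U HU)|].
    split; [apply (continuous_proj A V HV)|].
    split; [auto|]. split; [auto|]. intros z; apply HUV.
  - intros C x HC Cx.
    destruct HC as [V [HV HVC]].
    assert (Hc : closed (complement V)) by (apply closed_complement_open; auto).
    assert (HVx : V (proj1_sig x)) by (apply HVC; exact Cx).
    destruct (HCR (complement V) (proj1_sig x) Hc) as [f [Hf [Hfx [Hf1 Hf01]]]].
    { intros N; apply N; auto. }
    exists (fun z : subspace S A => f (proj1_sig z)). split; [|split; [auto|split]].
    + apply continuous_R_comp; auto; apply continuous_proj.
    + intros y Cy; apply Hf1; intros Vy; apply HVC in Vy; auto.
    + intros y; apply Hf01.
Qed.

Section WithP.
Variable P : property.
Hypothesis HP : compactness_like P.

Lemma homeo_P (S T : space) (f : S -> T) (g : T -> S) :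
  tychonoff S -> tychonoff T -> continuous f -> continuous g ->
  (forall x, g (f x) = x) -> (forall y, f (g y) = y) -> P S -> P T.
Proof.
  intros HS HT Hf Hg Hgf Hfg HPS.
  destruct HP as [_ [_ [Hinv _]]].
  apply (Hinv S T f HS HT); auto.
  split; [exact Hf|split; [|split]].
  - intros C HC. unfold closed.
    apply (open_ext (fun y => complement C (g y))); [apply Hg; exact HC|].
    intros y; unfold complement, image; split.
    + intros H [x [Cx E]]; subst y; rewrite Hgf in H; auto.
    + intros H Cg; apply H; exists (g y); auto.
  - intros y; exists (g y); auto.
  - intros y F HF Hcov.
    assert (Hy : f (g y) = y) by auto.
    destruct (Hcov (exist _ (g y) Hy)) as [U [FU HU]].
    exists (U :: nil); split.
    + intros V [<-|[]]; auto.
    + intros z; exists U; split; [left; auto|].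
      assert (z = exist _ (g y) Hy) as ->; auto.
      apply sig_eq; simpl. destruct z as [z hz]; simpl. rewrite <- hz; auto.
Qed.

Lemma P_empty (S : space) : tychonoff S -> (forall x : S, False) -> P S.
Proof.
  intros HS HE. destruct HP as [_ [Hadd _]].
  apply (Hadd S 0%nat (fun _ _ => False) HS).
  - intros k Hk; inversion Hk.
  - intros k l x Hk; inversion Hk.
  - intros x; destruct (HE x).
Qed.
End WithP.

Definition nestset {S : space} (A : set S) (B : set (subspace S A)) : set S :=
  fun s => A s /\ forall h : A s, B (exist _ s h).

Section Nest.
Variables (S : space) (A : set S) (B : set (subspace S A)).

Definition nest_f (z : subspace (subspace S A) B) : subspace S (nestset A B).
Proof.
  destruct z as [[s ha] hb]. exists s. split; [exact ha|].
  intros h. replace h with ha by apply proof_irrelevance. exact hb.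
Defined.

Definition nest_g (z : subspace S (nestset A B)) : subspace (subspace S A) B :=
  exist _ (exist _ (proj1_sig z) (proj1 (proj2_sig z))) (proj2 (proj2_sig z) _).

Lemma nest_f_val z : proj1_sig (nest_f z) = proj1_sig (proj1_sig z).
Proof. destruct z as [[s ha] hb]; reflexivity. Qed.

Lemma nest_cont_f : continuous nest_f.
Proof.
  apply continuous_into_sub.
  replace (fun x => proj1_sig (nest_f x)) with (fun x : subspace (subspace S A) B => proj1_sig (proj1_sig x)).
  - apply (continuous_comp (fun x : subspace (subspace S A) B => proj1_sig x) (fun y : subspace S A => proj1_sig y));
    apply continuous_proj.
  - apply functional_extensionality; intros; rewrite nest_f_val; auto.
Qed.

Lemma nest_cont_g : continuous nest_g.
Proof.
  apply continuous_into_sub. apply continuous_into_sub. apply continuous_proj.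
Qed.

Lemma nest_gf z : nest_g (nest_f z) = z.
Proof. apply sig_eq; apply sig_eq. unfold nest_g; simpl. apply nest_f_val. Qed.

Lemma nest_fg z : nest_f (nest_g z) = z.
Proof. apply sig_eq. rewrite nest_f_val. reflexivity. Qed.
End Nest.

Lemma P_nest (P : property) (HP : compactness_like P) (S : space) (A : set S) (B : set (subspace S A)) :
  tychonoff S ->
  (P (subspace (subspace S A) B) <-> P (subspace S (nestset A B))).
Proof.
  intros HS; split; intros H.
  - apply (homeo_P P HP _ _ (nest_f S A B) (nest_g S A B)); auto;
      try apply subspace_tych; try apply subspace_tych; auto;
      try apply nest_cont_f; try apply nest_cont_g; try apply nest_gf; try apply nest_fg.
  - apply (homeo_P P HP _ _ (nest_g S A B) (nest_f S A B)); auto;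
      try apply subspace_tych; try apply subspace_tych; auto;
      try apply nest_cont_f; try apply nest_cont_g; try apply nest_gf; try apply nest_fg.
Qed.

Lemma P_subspace_ext (P : property) (S : space) (A B : set S) :
  (forall x, A x <-> B x) -> P (subspace S A) -> P (subspace S B).
Proof. intros H; rewrite (set_ext A B H); auto. Qed.

Lemma P_full (P : property) (HP : compactness_like P) (S : space) (A : set S) :
  tychonoff S -> (forall x, A x) -> P (subspace S A) -> P S.
Proof.
  intros HS HA H.
  apply (homeo_P P HP _ _ (fun z : subspace S A => proj1_sig z) (fun x => exist _ x (HA x))); auto.
  - apply subspace_tych; auto.
  - apply continuous_proj.
  - apply continuous_into_sub. intros U HU; exact HU.
  - intros z; apply sig_eq; reflexivity.
Qed.

Section Sum.
Variables (S : space) (n : nat) (D : nat -> set S).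

Definition sum_pt := {p : S * nat | (snd p < n)%nat /\ D (snd p) (fst p)}.
Definition sfst (q : sum_pt) : S := fst (proj1_sig q).
Definition ssnd (q : sum_pt) : nat := snd (proj1_sig q).

Definition sum_open (U : set sum_pt) : Prop :=
  forall p, U p -> exists V : set S, open V /\ V (sfst p) /\
    forall p', ssnd p' = ssnd p -> V (sfst p') -> U p'.

Lemma sum_open_setT : sum_open (fun _ => True).
Proof. intros p _; exists (fun _ => True); split; [apply open_setT|auto]. Qed.

Lemma sum_open_setI U V : sum_open U -> sum_open V -> sum_open (fun x => U x /\ V x).
Proof.
  intros HU HV p [Up Vp].
  destruct (HU p Up) as [U' [HU' [U'p HU'']]], (HV p Vp) as [V' [HV' [V'p HV'']]].
  exists (fun x => U' x /\ V' x); split; [apply open_setI; auto|split; [auto|]].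
  intros p' E [H1 H2]; split; auto.
Qed.

Lemma sum_open_bigU (F : set (set sum_pt)) :
  (forall U, F U -> sum_open U) -> sum_open (fun x => exists U, F U /\ U x).
Proof.
  intros HF p [U [FU Up]]. destruct (HF U FU p Up) as [V [HV [Vp HVU]]].
  exists V; split; [auto|split; [auto|]]. intros p' E Vp'; exists U; split; auto.
Qed.

Definition sumsp : space := Space sum_pt sum_open sum_open_setT sum_open_setI sum_open_bigU.

Definition piece (k : nat) : set sumsp := fun q => ssnd q = k.

Lemma sfst_cont : continuous (sfst : sumsp -> S).
Proof.
  intros V HV p Vp; exists V; split; [auto|split; auto].
Qed.

Lemma piece_open k : open (piece k).
Proof. intros p Hp; exists (fun _ => True); split; [apply open_setT|split; [auto|]].
  intros p' E _; unfold piece in *; congruence. Qed.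

Lemma piece_closed k : closed (piece k).
Proof. intros p Hp; exists (fun _ => True); split; [apply open_setT|split; [auto|]].
  intros p' E _; unfold piece, complement in *; congruence. Qed.

Lemma sum_pt_eq (q q' : sum_pt) : sfst q = sfst q' -> ssnd q = ssnd q' -> q = q'.
Proof.
  intros H1 H2; apply sig_eq. unfold sfst, ssnd in *.
  destruct (proj1_sig q), (proj1_sig q'); simpl in *; congruence.
Qed.

Lemma sumsp_tych : tychonoff S -> tychonoff sumsp.
Proof.
  intros [HH HCR]; split.
  - intros p p' Hpp'.
    destruct (Nat.eq_dec (ssnd p) (ssnd p')) as [E|E].
    + assert (sfst p <> sfst p') by (intros E'; apply Hpp'; apply sum_pt_eq; auto).
      destruct (HH _ _ H) as [U [V [HU [HV [Ux [Vy HUV]]]]]].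
      exists (fun q : sumsp => U (sfst q)), (fun q : sumsp => V (sfst q)).
      split; [apply sfst_cont; auto|]. split; [apply sfst_cont; auto|].
      split; [auto|]. split; [auto|]. intros z; apply HUV.
    + exists (piece (ssnd p)), (piece (ssnd p')).
      split; [apply piece_open|]. split; [apply piece_open|].
      split; [reflexivity|]. split; [reflexivity|].
      unfold piece; intros z [E1 E2]; congruence.
  - intros C p HC Cp.
    destruct (HC p Cp) as [V [HV [Vp HVC]]].
    assert (Hc : closed (complement V)) by (apply closed_complement_open; auto).
    destruct (HCR (complement V) (sfst p) Hc) as [f [Hf [Hfx [Hf1 Hf01]]]].
    { intros N; apply N; auto. }
    set (k := ssnd p).
    exists (fun q : sumsp => if Nat.eq_dec (ssnd q) k then f (sfst q) else 1).
    split; [|split; [|split]].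
    + intros U HU q Uq.
      destruct (Nat.eq_dec (ssnd q) k) as [E|E].
      * exists (fun s => U (f s)); split; [apply Hf; auto|split; [auto|]].
        intros p' E' Hp'. destruct (Nat.eq_dec (ssnd p') k); [auto|congruence].
      * exists (fun _ => True); split; [apply open_setT|split; [auto|]].
        intros p' E' _. destruct (Nat.eq_dec (ssnd p') k); [congruence|auto].
    + simpl. destruct (Nat.eq_dec (ssnd p) k) as [_|Hne]; [auto|exfalso; apply Hne; reflexivity].
    + intros q Cq. destruct (Nat.eq_dec (ssnd q) k) as [E|E]; [|auto].
      apply Hf1. intros Vq. apply (HVC q E Vq Cq).
    + intros q. destruct (Nat.eq_dec (ssnd q) k); [apply Hf01|lra].
Qed.

Section PieceHomeo.
Variables (k : nat) (Hk : (k < n)%nat).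

Definition pa (z : subspace sumsp (piece k)) : subspace S (D k).
Proof.
  exists (sfst (proj1_sig z)). destruct z as [[[s j] [h1 h2]] hz].
  unfold piece, ssnd in hz; simpl in hz. subst j. exact h2.
Defined.

Definition pb0 (z : subspace S (D k)) : sumsp :=
  exist _ (proj1_sig z, k) (conj Hk (proj2_sig z)).

Definition pb (z : subspace S (D k)) : subspace sumsp (piece k) :=
  exist _ (pb0 z) eq_refl.

Lemma pb0_cont : continuous pb0.
Proof.
  intros U HU.
  exists (fun s => exists V, (open V /\ forall s' (h : D k s'), V s' -> U (pb0 (exist _ s' h))) /\ V s).
  split.
  - apply open_bigU. intros V [HV _]; auto.
  - intros [s h]; split.
    + intros Uz. destruct (HU _ Uz) as [V [HV [Vs HVU]]].
      exists V; split; [split; [auto|]|auto].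
      intros s' h' Vs'. apply HVU; auto.
    + intros [V [[HV HVU] Vs]]. apply HVU; auto.
Qed.

Lemma pa_cont : continuous pa.
Proof.
  apply continuous_into_sub. simpl.
  apply (continuous_comp (fun z : subspace sumsp (piece k) => proj1_sig z) sfst).
  - apply continuous_proj.
  - apply sfst_cont.
Qed.

Lemma pb_cont : continuous pb.
Proof. apply continuous_into_sub. apply pb0_cont. Qed.

Lemma pab z : pa (pb z) = z.
Proof. apply sig_eq; reflexivity. Qed.

Lemma pba z : pb (pa z) = z.
Proof.
  apply sig_eq. apply sum_pt_eq; [reflexivity|].
  destruct z as [q hq]; unfold piece in hq. unfold ssnd at 1, pb0; simpl. symmetry; exact hq.
Qed.
End PieceHomeo.

Lemma fin_inter (s : S) (G : nat -> set S -> Prop) :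
  (forall k V V', (forall x, V' x -> V x) -> G k V -> G k V') ->
  forall m, (forall k, (k < m)%nat -> exists V, open V /\ V s /\ G k V) ->
  exists V, open V /\ V s /\ forall k, (k < m)%nat -> G k V.
Proof.
  intros Gmon m; induction m as [|m IH]; intros H.
  - exists (fun _ => True); split; [apply open_setT|split; [auto|]]. intros k Hk; inversion Hk.
  - destruct IH as [V [HV [Vs HVG]]]. { intros k Hk; apply H; lia. }
    destruct (H m) as [V' [HV' [V's HV'G]]]; [lia|].
    exists (fun x => V x /\ V' x); split; [apply open_setI; auto|split; [auto|]].
    intros k Hk. destruct (Nat.eq_dec k m) as [->|E].
    + apply (Gmon m V'); [tauto|auto].
    + apply (Gmon k V); [tauto|]. apply HVG; lia.
Qed.

Lemma sum_proj_perfect :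
  (forall k, (k < n)%nat -> closed (D k)) ->
  (forall s, exists k, (k < n)%nat /\ D k s) ->
  perfect (sfst : sumsp -> S).
Proof.
  intros HDc Hcov. split; [apply sfst_cont|split; [|split]].
  - intros C HC. unfold closed. apply open_local. intros s Hs.
    destruct (fin_inter s (fun k V => forall s', V s' -> forall h : (k < n)%nat /\ D k s',
       ~ C (exist _ (s', k) h))) with (m := n) as [V [HV [Vs HVG]]].
    + intros k V V' HVV' HG s' V's h; apply HG; auto.
    + intros k Hk. destruct (classic (D k s)) as [Ds|Ds].
      * set (q := (exist _ (s, k) (conj Hk Ds) : sumsp)).
        assert (Cq : complement C q) by (intros Cq; apply Hs; exists q; auto).
        destruct (HC q Cq) as [V [HV [Vq HVC]]].
        exists V; split; [auto|split; [auto|]].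
        intros s' Vs' h. apply (HVC (exist _ (s', k) h)); auto.
      * exists (complement (D k)); split; [apply (HDc k Hk)|split; [auto|]].
        intros s' Ds' h. exfalso; apply Ds'; apply h.
    + exists V; split; [auto|split; [auto|]].
      intros s' Vs' [q [Cq Eq]]. subst s'.
      destruct q as [[a b] h]. unfold sfst in *; simpl in *.
      apply (HVG b (proj1 h) a Vs' h Cq).
  - intros s. destruct (Hcov s) as [k [Hk Ds]].
    exists (exist _ (s, k) (conj Hk Ds)); reflexivity.
  - intros s F HF Hcover.
    assert (Hm : forall m, exists l : list (set (subspace sumsp (fun q => sfst q = s))),
       (forall U, In U l -> F U) /\
       forall z, (ssnd (proj1_sig z) < m)%nat -> exists U, In U l /\ U z).
    { induction m as [|m [l [Hl1 Hl2]]].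
      - exists nil; split; [intros U []|]. intros z Hz; lia.
      - destruct (classic (exists z : subspace sumsp (fun q => sfst q = s), ssnd (proj1_sig z) = m))
          as [[z0 Hz0]|Hno].
        + destruct (Hcover z0) as [U [FU Uz0]].
          exists (U :: l); split.
          * intros V [<-|HV]; auto.
          * intros z Hz. destruct (Nat.eq_dec (ssnd (proj1_sig z)) m) as [E|E].
            -- exists U; split; [left; auto|].
               replace z with z0; auto.
               apply sig_eq; apply sum_pt_eq; [|transitivity m; [exact Hz0|symmetry; exact E]].
               pose proof (proj2_sig z0) as A0; pose proof (proj2_sig z) as A1; simpl in A0, A1. transitivity s; [exact A0|symmetry; exact A1].
            -- destruct (Hl2 z) as [V [HV Vz]]; [lia|]. exists V; split; [right|]; auto.
        + exists l; split; auto. intros z Hz.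
          destruct (Nat.eq_dec (ssnd (proj1_sig z)) m) as [E|E].
          * exfalso; apply Hno; exists z; auto.
          * apply Hl2; lia. }
    destruct (Hm n) as [l [Hl1 Hl2]]. exists l; split; auto.
    intros z; apply Hl2. destruct z as [[[a b] [h1 h2]] hz]; unfold ssnd; simpl; auto.
Qed.
End Sum.

Section SumP.
Variable P : property.
Hypothesis HP : compactness_like P.

Lemma sum_P (S : space) (n : nat) (D : nat -> set S) :
  tychonoff S ->
  (forall k, (k < n)%nat -> P (subspace S (D k))) -> P (sumsp S n D).
Proof.
  intros HS HD. destruct HP as [_ [Hadd _]].
  assert (HT : tychonoff (sumsp S n D)) by (apply sumsp_tych; auto).
  apply (Hadd _ n (piece S n D) HT).
  - intros k Hk; split; [apply piece_closed|].
    apply (homeo_P P HP _ _ (pb S n D k Hk) (pa S n D k));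
      [apply subspace_tych; auto | apply subspace_tych; auto | apply pb_cont | apply pa_cont
      | apply pab | apply pba | apply HD; auto].
  - intros k l x _ _ E H1 H2; unfold piece in *; congruence.
  - intros [[s k] [h1 h2]]; exists k; split; auto; reflexivity.
Qed.

Lemma union_P (S : space) (n : nat) (D : nat -> set S) :
  tychonoff S ->
  (forall k, (k < n)%nat -> closed (D k) /\ P (subspace S (D k))) ->
  (forall s, exists k, (k < n)%nat /\ D k s) -> P S.
Proof.
  intros HS HD Hcov. destruct HP as [_ [_ [Hinv _]]].
  apply (Hinv (sumsp S n D) S (sfst S n D)); auto.
  - apply sumsp_tych; auto.
  - apply sum_proj_perfect; auto. intros k Hk; apply HD; auto.
  - apply sum_P; auto. intros k Hk; apply HD; auto.
Qed.

Lemma closed_hered (S : space) (A : set S) :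
  tychonoff S -> closed A -> P S -> P (subspace S A).
Proof.
  intros HS HA HPS. destruct HP as [Hclop [_ [_ [Hpinv _]]]].
  set (D := fun k => match k with 1%nat => A | _ => fun _ : S => True end).
  assert (HT : tychonoff (sumsp S 2 D)) by (apply sumsp_tych; auto).
  assert (HPT : P (sumsp S 2 D)).
  { apply (Hpinv (sumsp S 2 D) S (sfst S 2 D)); auto.
    apply sum_proj_perfect.
    - intros k Hk. destruct k as [|[|k]]; simpl; auto; try lia.
      unfold closed; apply (open_ext (fun _ => False)); [apply open_empty|].
      unfold complement; tauto.
    - intros s; exists 0%nat; simpl; split; auto. }
  assert (Hk : (1 < 2)%nat) by lia.
  apply (homeo_P P HP _ _ (pa S 2 D 1) (pb S 2 D 1 Hk));
    [apply subspace_tych; auto | apply subspace_tych; auto | apply pa_cont | apply pb_cont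
    | apply pba | apply pab | ].
  apply Hclop; auto; [apply piece_open|apply piece_closed].
Qed.
End SumP.

Lemma point_closed (S : space) (x : S) : hausdorff S -> closed (fun y => y = x).
Proof.
  intros HH; unfold closed; apply open_local; intros y Hy.
  destruct (HH y x Hy) as [U [V [HU [HV [Uy [Vx HUV]]]]]].
  exists U; split; [auto|split; [auto|]]. intros z Uz E; subst z. apply (HUV x); auto.
Qed.

Lemma sepHK (S T : space) (K : set S) (h : S -> T) (t : T) :
  hausdorff T -> compact (subspace S K) -> continuous h ->
  (forall k, K k -> h k <> t) ->
  exists U V, open U /\ open V /\ U t /\ (forall z, ~ (U z /\ V z)) /\
    forall k, K k -> V (h k).
Proof.
  intros HT HK Hh Hne.
  set (F := fun W : subspace S K -> Prop => exists U V, open U /\ open V /\ U t /\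
           (forall z, ~ (U z /\ V z)) /\ forall z, W z <-> V (h (proj1_sig z))).
  destruct (HK F) as [l [Hl1 Hl2]].
  - intros W [U [V [HU [HV [_ [_ HW]]]]]]. exists (fun s => V (h s)); split; [apply Hh; auto|auto].
  - intros z. destruct (HT t (h (proj1_sig z))) as [U [V [HU [HV [Ut [Vh HUV]]]]]].
    { intros E; apply (Hne (proj1_sig z) (proj2_sig z)); auto. }
    exists (fun z' => V (h (proj1_sig z'))); split; [|auto].
    exists U, V; repeat split; auto.
  - assert (Hind : forall l : list (set (subspace S K)), (forall W, In W l -> F W) ->
      exists U V, open U /\ open V /\ U t /\ (forall z, ~ (U z /\ V z)) /\
      forall z, (exists W, In W l /\ W z) -> V (h (proj1_sig z))).
    { induction l0 as [|W l0 IH]; intros Hl.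
      - exists (fun _ => True), (fun _ => False); repeat split; auto.
        + apply open_setT.
        + apply open_empty.
        + intros z [_ []].
        + intros z [W [[] _]].
      - destruct IH as [U [V [HU [HV [Ut [HUV HVc]]]]]]. { intros W' HW'; apply Hl; right; auto. }
        destruct (Hl W (or_introl eq_refl)) as [U' [V' [HU' [HV' [U't [HUV' HW]]]]]].
        exists (fun x => U x /\ U' x), (fun x => V x \/ V' x); repeat split; auto.
        + apply open_setI; auto.
        + apply open_union2; auto.
        + intros z [[Uz U'z] [Vz|V'z]]; [apply (HUV z)|apply (HUV' z)]; auto.
        + intros z [W0 [[<-|HW0] W0z]].
          * right; apply HW; auto.
          * left; apply HVc; exists W0; auto. }
    destruct (Hind l Hl1) as [U [V [HU [HV [Ut [HUV HVc]]]]]].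
    exists U, V; repeat split; auto.
    intros k Kk. apply (HVc (exist _ k Kk)). apply Hl2.
Qed.

Lemma compact_closed (S : space) (K : set S) :
  hausdorff S -> compact (subspace S K) -> closed K.
Proof.
  intros HH HK. unfold closed; apply open_local; intros y Hy.
  destruct (sepHK S S K (fun x => x) y HH HK) as [U [V [HU [HV [Uy [HUV HVK]]]]]].
  - intros U HU; exact HU.
  - intros k Kk E; subst; auto.
  - exists U; split; [auto|split; [auto|]]. intros z Uz Kz. apply (HUV z); split; auto.
Qed.

Lemma sepFun (S : space) (K E : set S) :
  completely_regular S -> compact (subspace S K) -> closed E ->
  (forall x, K x -> ~ E x) ->
  exists g : S -> R, continuous_R g /\ (forall x, K x -> g x = 0) /\
    (forall x, E x -> g x = 1) /\ (forall x, 0 <= g x <= 1).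
Proof.
  intros HCR HK HE Hdis.
  set (F := fun W : subspace S K -> Prop => exists f, continuous_R f /\ (forall y, E y -> f y = 1) /\
     (forall y, 0 <= f y <= 1) /\ forall z, W z <-> f (proj1_sig z) < 1/2).
  destruct (HK F) as [l [Hl1 Hl2]].
  - intros W [f [Hf [_ [_ HW]]]]. exists (fun s => f s < 1/2); split; [apply cont_R_open_lt; auto|auto].
  - intros z. destruct (HCR E (proj1_sig z) HE) as [f [Hf [Hf0 [Hf1 Hf01]]]].
    { apply Hdis; apply (proj2_sig z). }
    exists (fun z' => f (proj1_sig z') < 1/2); split.
    + exists f; repeat split; auto; apply Hf01.
    + lra.
  - assert (Hind : forall l : list (set (subspace S K)), (forall W, In W l -> F W) ->
      exists g0, continuous_R g0 /\ (forall y, E y -> g0 y = 1) /\ (forall y, 0 <= g0 y <= 1) /\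
      forall z, (exists W, In W l /\ W z) -> g0 (proj1_sig z) < 1/2).
    { induction l0 as [|W l0 IH]; intros Hl.
      - exists (fun _ => 1); repeat split; auto; try lra.
        + apply cont_R_const.
        + intros z [W [[] _]].
      - destruct IH as [g0 [Hg0 [Hg0E [Hg001 Hg0c]]]]. { intros W' HW'; apply Hl; right; auto. }
        destruct (Hl W (or_introl eq_refl)) as [f [Hf [HfE [Hf01 HW]]]].
        exists (fun y => Rmin (f y) (g0 y)); repeat split.
        + apply cont_R_min; auto.
        + intros y Ey; rewrite HfE, Hg0E; auto; unfold Rmin; destruct Rle_dec; lra.
        + specialize (Hf01 y); specialize (Hg001 y); unfold Rmin; destruct Rle_dec; lra.
        + specialize (Hf01 y); specialize (Hg001 y); unfold Rmin; destruct Rle_dec; lra.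
        + intros z [W0 [[<-|HW0] W0z]].
          * apply HW in W0z. unfold Rmin; destruct Rle_dec; lra.
          * assert (g0 (proj1_sig z) < 1/2) by (apply Hg0c; exists W0; auto).
            unfold Rmin; destruct Rle_dec; lra. }
    destruct (Hind l Hl1) as [g0 [Hg0 [Hg0E [Hg001 Hg0c]]]].
    exists (fun y => Rmax 0 (2 * g0 y + -1)); repeat split.
    + apply cont_R_max; [apply cont_R_const|apply cont_R_affine; auto].
    + intros x Kx. assert (g0 x < 1/2).
      { apply (Hg0c (exist _ x Kx)); apply Hl2. }
      unfold Rmax; destruct Rle_dec; lra.
    + intros x Ex; rewrite Hg0E; auto. unfold Rmax; destruct Rle_dec; lra.
    + unfold Rmax; destruct Rle_dec; lra.
    + specialize (Hg001 x); unfold Rmax; destruct Rle_dec; lra.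
Qed.

Lemma cr_T1_hausdorff (S : space) :
  completely_regular S -> (forall x : S, closed (fun y => y = x)) -> hausdorff S.
Proof.
  intros HCR HT1 x y Hxy.
  destruct (HCR (fun z => z = y) x (HT1 y)) as [f [Hf [Hfx [Hf1 _]]]]; [auto|].
  exists (fun z => f z < 1/2), (fun z => 1/2 < f z).
  split; [apply cont_R_open_lt; auto|]. split; [apply cont_R_open_gt; auto|].
  split; [lra|]. split; [rewrite Hf1; auto; lra|]. intros z; lra.
Qed.

Lemma closed_trace {T : space} (A : set T) (B : set T) :
  closed B -> closed (fun z : subspace T A => B (proj1_sig z)).
Proof. intros HB. exact (continuous_proj A _ HB). Qed.

Lemma interior_open {S : space} (Z : set S) : open (interior Z).
Proof.
  apply open_local; intros x [U [HU [Ux HUZ]]].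
  exists U; split; [auto|split; [auto|]]. intros y Uy; exists U; auto.
Qed.

Lemma interior_sub {S : space} (Z : set S) x : interior Z x -> Z x.
Proof. intros [U [_ [Ux H]]]; auto. Qed.

Lemma embed_closure {S T : space} (i : S -> T) (C : set S) (x : S) :
  embedding i -> closure (image i C) (i x) -> closure C x.
Proof.
  intros [_ [_ Hemb]] Hcl D HD HCD.
  destruct (Hemb (complement D) HD) as [V [HV HDV]].
  apply NNPP; intros nD.
  apply (Hcl (complement V)).
  - apply closed_complement_open; auto.
  - intros t [z [Cz <-]] Vz. apply HDV in Vz. apply Vz; auto.
  - apply HDV; auto.
Qed.

Lemma open_of_complement_closed {S : space} (A : set S) : closed (complement A) -> open A.
Proof. intros H; unfold closed in H; apply (open_ext _ _ H). intros x; unfold complement; split; [apply NNPP|tauto]. Qed.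

Section Main.
Variables (P : property) (HP : compactness_like P)
  (Y : space) (HY : tychonoff Y) (Xs : set Y)
  (Hdense : dense Xs) (Hrem : compact (subspace Y (complement Xs)))
  (bX : space) (i : subspace Y Xs -> bX) (Hb : stone_cech (subspace Y Xs) bX i)
  (zY : space) (j : Y -> zY) (Hz : compactification Y zY j)
  (phi : bX -> zY) (Hphi : continuous phi)
  (Hext : forall x : subspace Y Xs, phi (i x) = j (proj1_sig x)).

Let X := subspace Y Xs.
Let K := complement Xs.

Lemma HXt : tychonoff X.
Proof. apply subspace_tych; auto. Qed.

Lemma HKclosed : closed K.
Proof. apply compact_closed; [apply HY|auto]. Qed.

Lemma HXsopen : open Xs.
Proof. apply open_of_complement_closed; apply HKclosed. Qed.

Lemma L1_closed (C : set X) (g : Y -> R) :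
  continuous_R g -> (forall y, K y -> g y = 0) -> (forall x, C x -> 1/2 <= g (proj1_sig x)) ->
  closed (nestset Xs (closure C)).
Proof.
  intros Hg HgK HC. unfold closed; apply open_local; intros y Hy.
  destruct (classic (Xs y)) as [Xy|Ky].
  - assert (Hn : ~ closure C (exist _ y Xy)).
    { intros Hc; apply Hy; split; auto. intros h. replace h with Xy by apply proof_irrelevance; auto. }
    destruct (closure_closed C) as [V [HV HVc]].
    exists (fun z => V z /\ Xs z); split; [apply open_setI; auto; apply HXsopen|].
    split.
    + split; auto. apply (HVc (exist _ y Xy)); auto.
    + intros z [Vz Xz] [_ Hz0]. apply (proj2 (HVc (exist _ z Xz)) Vz). apply Hz0.
  - exists (fun z => g z < 1/2); split; [apply cont_R_open_lt; auto|].
    split; [rewrite HgK; auto; lra|].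
    intros z Hgz [Xz Hz0]. specialize (Hz0 Xz).
    assert (Hge : closed (fun x : X => 1/2 <= g (proj1_sig x))).
    { apply cont_R_closed_ge. apply continuous_R_comp; auto. apply continuous_proj. }
    specialize (Hz0 _ Hge HC). simpl in Hz0. lra.
Qed.

Lemma L1 (C : set X) (g : Y -> R) :
  P Y -> continuous_R g -> (forall y, K y -> g y = 0) -> (forall x, C x -> 1/2 <= g (proj1_sig x)) ->
  P (subspace X (closure C)).
Proof.
  intros HPY Hg HgK HC.
  apply (P_nest P HP Y Xs (closure C) HY).
  apply closed_hered; auto. apply (L1_closed C g); auto.
Qed.

Lemma dir1_local : P Y -> locally P X.
Proof.
  intros HPY x.
  destruct (sepFun Y K (fun y => y = proj1_sig x) (proj2 HY) Hrem) as [g [Hg [HgK [Hgx Hg01]]]].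
  - apply point_closed; apply HY.
  - intros y Ky E; subst y; apply Ky; apply (proj2_sig x).
  - exists (fun x' : X => 1/2 < g (proj1_sig x')). split; [|split].
    + apply cont_R_open_gt. apply continuous_R_comp; auto. apply continuous_proj.
    + simpl; rewrite Hgx; auto; lra.
    + apply (L1 _ g); auto. intros x' H; lra.
Qed.

Lemma dir1_lambda : P Y -> forall p : bX, ~ lambdaP P X bX i p ->
     exists y : Y, complement Xs y /\ phi p = j y.
Proof.
  intros HPY p Hp. apply NNPP; intros Hno. apply Hp.
  destruct Hz as [_ [HzH [[_ [Hjc _]] _]]].
  destruct (sepHK Y zY K j (phi p) HzH Hrem Hjc) as [U [V [HU [HV [Up [HUV HVK]]]]]].
  { intros k Kk E. apply Hno. exists k; split; auto. }
  set (E := fun y => ~ V (j y)).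
  assert (HE : closed E) by (apply closed_complement_open; apply Hjc; auto).
  destruct (sepFun Y K E (proj2 HY) Hrem HE) as [g [Hg [HgK [HgE Hg01]]]].
  { intros y Ky Ey; apply Ey; apply HVK; auto. }
  set (C := fun x : X => 1/2 < g (proj1_sig x)).
  exists C. split; [|split].
  - exists (fun x : X => Rmax 0 (1 * g (proj1_sig x) + - (1/2))). split.
    + apply cont_R_max; [apply cont_R_const|]. apply cont_R_affine.
      apply continuous_R_comp; auto. apply continuous_proj.
    + intros x; unfold C; unfold Rmax; destruct Rle_dec; split; intros; lra.
  - apply (L1 C g); auto. intros x Hx; unfold C in Hx; lra.
  - exists (fun q => U (phi q)). split; [apply Hphi; auto|split; [auto|]].
    intros q Uq D HD HCD. apply NNPP; intros nD.
    destruct Hb as [[_ [_ [_ Hidense]]] _].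
    assert (HW : open (fun t => U (phi t) /\ complement D t)) by (apply open_setI; [apply Hphi; auto|exact HD]).
    apply (Hidense q (complement (fun t => U (phi t) /\ complement D t))).
    + apply closed_complement_open; auto.
    + intros t [x [_ <-]] [Ux nDx]. apply nDx. apply HCD. exists x; split; auto.
      unfold C. rewrite Hext in Ux. rewrite HgE; [lra|]. intros Vx. apply (HUV (j (proj1_sig x))); auto.
    + split; auto.
Qed.

Section Dir2.
Hypothesis H2 : forall p : bX, ~ lambdaP P X bX i p ->
     exists y : Y, complement Xs y /\ phi p = j y.

Lemma L2 (A : set Y) : closed A -> (forall y, A y -> Xs y) -> P (subspace Y A).
Proof.
  intros HA HAX.
  set (A' := fun x : X => A (proj1_sig x)).
  set (Aset := closure (image i A')).
  destruct Hb as [[HbX [_ [Hiemb _]]] _].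
  destruct Hz as [_ [_ [[_ [_ Hjemb]] _]]].
  assert (Hlam : forall q, Aset q -> lambdaP P X bX i q).
  { intros q Hq. apply NNPP; intros nl. destruct (H2 q nl) as [y [Ky Eq]].
    destruct (Hjemb (complement A) HA) as [W [HW HWA]].
    assert (Wy : W (j y)) by (apply HWA; intros Ay; apply Ky; auto).
    apply (Hq (complement (fun t => W (phi t)))).
    - apply closed_complement_open. apply Hphi; auto.
    - intros t [x [Ax <-]] Wx. rewrite Hext in Wx. apply HWA in Wx. apply Wx; apply Ax.
    - rewrite Eq; auto. }
  set (F := fun U : set bX => U = complement Aset \/
            exists C, cozero C /\ P (subspace X (closure C)) /\ U = interior (closure (image i C))).
  destruct (HbX F) as [l [Hl1 Hl2]].
  - intros U [->|[C [_ [_ ->]]]].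
    + apply closure_closed.
    + apply interior_open.
  - intros q. destruct (classic (Aset q)) as [Aq|nAq].
    + destruct (Hlam q Aq) as [C [HC [HPC Hint]]].
      exists (interior (closure (image i C))); split; auto. right; exists C; auto.
    + exists (complement Aset); split; auto. left; auto.
  - set (good := fun k C => cozero C /\ P (subspace X (closure C)) /\
                  nth k l (fun _ => False) = interior (closure (image i C))).
    set (Ce := fun k => epsilon (inhabits (fun _ : X => False)) (good k)).
    set (Dk := fun k (x : X) => (exists C, good k C) /\ closure (Ce k) x).
    assert (HXt' : tychonoff X) by apply HXt.
    assert (HA' : closed A') by (apply closed_trace; auto).
    assert (HPA' : P (subspace X A')).
    { apply (union_P P HP (subspace X A') (length l) (fun k z => Dk k (proj1_sig z))).
      - apply subspace_tych; auto.
      - intros k Hk. split.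
        + apply closed_trace. destruct (classic (exists C, good k C)) as [Hg|Hg].
          * apply (open_ext (complement (closure (Ce k)))); [apply closure_closed|].
            intros x; unfold complement, Dk; tauto.
          * apply (open_ext (fun _ => True)); [apply open_setT|].
            intros x; unfold complement, Dk; tauto.
        + destruct (classic (exists C, good k C)) as [Hg|Hg].
          * pose proof (epsilon_spec (inhabits (fun _ : X => False)) (good k) Hg) as Hs.
            fold (Ce k) in Hs. destruct Hs as [_ [HPC _]].
            assert (H1 : P (subspace (subspace X (closure (Ce k))) (fun z => A' (proj1_sig z)))).
            { apply closed_hered; auto. apply subspace_tych; auto. apply closed_trace; auto. }
            apply (P_nest P HP X (closure (Ce k)) _ HXt') in H1.
            apply (P_nest P HP X A' _ HXt').
            revert H1; apply P_subspace_ext. intros x; unfold nestset, Dk; simpl; split.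
            -- intros [Hc Ha]. split; [apply (Ha Hc)|]. intros h. split; auto.
            -- intros [Ha Hd]. split; [apply (Hd Ha)|]. intros h; auto.
          * apply P_empty; auto. 
            -- apply subspace_tych; apply subspace_tych; auto.
            -- intros [[x hx] [Hg' _]]. apply Hg; auto.
      - intros [x Ax]. assert (Hax : Aset (i x)) by (apply closure_incl; exists x; auto).
        destruct (Hl2 (i x)) as [U [InU Ux]].
        destruct (In_nth l U (fun _ => False) InU) as [k [Hk Ek]].
        exists k; split; auto.
        destruct (Hl1 U InU) as [->|[C [HC [HPC EU]]]]; [exfalso; auto|].
        assert (Hg : exists C, good k C) by (exists C; unfold good; rewrite Ek; auto).
        split; auto.
        pose proof (epsilon_spec (inhabits (fun _ : X => False)) (good k) Hg) as Hs.
        fold (Ce k) in Hs. destruct Hs as [_ [_ Hs]].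
        apply (embed_closure i); auto. apply interior_sub. rewrite <- Hs, Ek; auto. }
    apply (P_nest P HP Y Xs A' HY) in HPA'.
    revert HPA'; apply P_subspace_ext. intros y; unfold nestset, A'; simpl; split.
    + intros [Xy H]; apply (H Xy).
    + intros Ay; split; [apply HAX; auto|]. intros h; auto.
Qed.
End Dir2.

Section Quot.
Variables (k0 : Y) (Hk0 : K k0).

Definition piQ (y : Y) : option X :=
  match excluded_middle_informative (Xs y) with
  | left h => Some (exist _ y h)
  | right _ => None
  end.

Lemma piQ_in y (h : Xs y) : piQ y = Some (exist _ y h).
Proof.
  unfold piQ; destruct (excluded_middle_informative (Xs y)) as [h'|n]; [|contradiction].
  f_equal; apply sig_eq; reflexivity.
Qed.

Lemma piQ_out y : ~ Xs y -> piQ y = None.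
Proof. intros n; unfold piQ; destruct (excluded_middle_informative (Xs y)); [contradiction|auto]. Qed.

Lemma piQ_inj a b : piQ a = piQ b -> Xs b -> a = b.
Proof.
  intros E hb. rewrite (piQ_in b hb) in E. destruct (classic (Xs a)) as [ha|na].
  - rewrite (piQ_in a ha) in E. injection E; auto.
  - rewrite (piQ_out a na) in E; discriminate.
Qed.

Definition Q_open (U : set (option X)) : Prop := open (fun y => U (piQ y)).

Lemma Q_open_setT : Q_open (fun _ => True).
Proof. apply open_setT. Qed.
Lemma Q_open_setI U V : Q_open U -> Q_open V -> Q_open (fun x => U x /\ V x).
Proof. intros; apply open_setI; auto. Qed.
Lemma Q_open_bigU (F : set (set (option X))) :
  (forall U, F U -> Q_open U) -> Q_open (fun x => exists U, F U /\ U x).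
Proof.
  intros HF. unfold Q_open.
  apply (open_ext (fun y => exists V, (exists U, F U /\ V = (fun y => U (piQ y))) /\ V y)).
  - apply open_bigU. intros V [U [FU ->]]; apply HF; auto.
  - intros y; split.
    + intros [V [[U [FU ->]] HV]]; exists U; auto.
    + intros [U [FU HU]]; exists (fun y => U (piQ y)); split; auto. exists U; auto.
Qed.

Definition Qsp : space := Space (option X) Q_open Q_open_setT Q_open_setI Q_open_bigU.

Definition sigQ (q : option X) : Y := match q with Some x => proj1_sig x | None => k0 end.

Lemma piQ_sig q : q <> None -> piQ (sigQ q) = q.
Proof.
  destruct q as [x|]; intros H; [|contradiction].
  simpl. rewrite (piQ_in _ (proj2_sig x)). f_equal; apply sig_eq; reflexivity.
Qed.

Lemma sig_piQ y : Xs y -> sigQ (piQ y) = y.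
Proof. intros h; rewrite (piQ_in y h); reflexivity. Qed.

Lemma piQ_cont : continuous (piQ : Y -> Qsp).
Proof. intros U HU; exact HU. Qed.

Lemma cont_fromY (g : Y -> R) :
  continuous_R g -> (forall y, K y -> g y = g k0) -> continuous_R (fun q : Qsp => g (sigQ q)).
Proof.
  intros Hg HgK U HU. unfold open; simpl; unfold Q_open.
  apply (open_ext (fun y => U (g y))); [apply Hg; auto|].
  intros y. destruct (classic (Xs y)) as [h|n].
  - rewrite sig_piQ; tauto.
  - rewrite (piQ_out y n); simpl. rewrite (HgK y n); tauto.
Qed.

Lemma Q_T1 (q0 : Qsp) : closed (fun q => q = q0).
Proof.
  unfold closed, open; simpl; unfold Q_open, complement.
  destruct q0 as [x|].
  - apply (open_ext (complement (fun y => y = proj1_sig x))).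
    + apply point_closed; apply HY.
    + intros y; unfold complement; split; intros H E; apply H.
      * apply piQ_inj; [|apply (proj2_sig x)]. rewrite E.
        rewrite (piQ_in _ (proj2_sig x)). f_equal; apply sig_eq; reflexivity.
      * subst y. rewrite (piQ_in _ (proj2_sig x)). f_equal; apply sig_eq; reflexivity.
  - apply (open_ext Xs); [apply HXsopen|].
    intros y; split; intros H.
    + rewrite (piQ_in y H); discriminate.
    + apply NNPP; intros n; apply H; apply piQ_out; auto.
Qed.

Lemma Q_CR : completely_regular Qsp.
Proof.
  intros C q HC Cq.
  set (C' := fun y => C (piQ y)).
  assert (HC' : closed C') by exact HC.
  destruct q as [x|].
  - destruct (proj2 HY C' (proj1_sig x) HC') as [h1 [Hh1 [Hh1x [Hh1C Hh101]]]].
    { unfold C'; rewrite (piQ_in _ (proj2_sig x)). replace (exist _ _ _) with x; auto. apply sig_eq; auto. }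
    destruct (sepFun Y K (fun y => y = proj1_sig x) (proj2 HY) Hrem) as [g [Hg [HgK [Hgx Hg01]]]].
    { apply point_closed; apply HY. }
    { intros y Ky E; subst y; apply Ky; apply (proj2_sig x). }
    set (h := fun y => Rmax (h1 y) (-1 * g y + 1)).
    assert (HhK : forall y, K y -> h y = 1).
    { intros y Ky; unfold h; rewrite HgK; auto. specialize (Hh101 y). unfold Rmax; destruct Rle_dec; lra. }
    exists (fun q => h (sigQ q)). split; [|split; [|split]].
    + apply cont_fromY. 
      * unfold h; apply cont_R_max; auto. apply cont_R_affine; auto.
      * intros y Ky; rewrite !HhK; auto.
    + simpl; unfold h; rewrite Hh1x, Hgx; auto. unfold Rmax; destruct Rle_dec; lra.
    + intros [x'|] Cq'.
      * simpl. unfold h. rewrite Hh1C. 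
        -- specialize (Hg01 (proj1_sig x')). unfold Rmax; destruct Rle_dec; lra.
        -- unfold C'. rewrite (piQ_in _ (proj2_sig x')). replace (exist _ _ _) with x'; auto. apply sig_eq; auto.
      * simpl. apply HhK; auto.
    + intros q'. unfold h. specialize (Hh101 (sigQ q')); specialize (Hg01 (sigQ q')).
      unfold Rmax; destruct Rle_dec; lra.
  - destruct (sepFun Y K C' (proj2 HY) Hrem HC') as [g [Hg [HgK [HgC Hg01]]]].
    { intros y Ky Cy. unfold C' in Cy. rewrite piQ_out in Cy; auto. }
    exists (fun q => g (sigQ q)). split; [|split; [|split]].
    + apply cont_fromY; auto. intros y Ky; rewrite !HgK; auto.
    + simpl; apply HgK; auto.
    + intros [x'|] Cq'; [|contradiction].
      simpl. apply HgC. unfold C'. rewrite (piQ_in _ (proj2_sig x')). replace (exist _ _ _) with x'; auto. apply sig_eq; auto.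
    + intros q'; apply Hg01.
Qed.

Lemma Q_tych : tychonoff Qsp.
Proof. split; [apply cr_T1_hausdorff; [apply Q_CR|apply Q_T1]|apply Q_CR]. Qed.
End Quot.

Section Final.
Variables (k0 : Y) (Hk0 : K k0).

Lemma piQ_some_proj (x : X) : piQ (proj1_sig x) = Some x.
Proof. rewrite (piQ_in _ (proj2_sig x)). f_equal; apply sig_eq; reflexivity. Qed.

Lemma piQ_perfect : perfect (piQ : Y -> Qsp).
Proof.
  split; [apply piQ_cont|split; [|split]].
  - intros C HC. unfold closed, open; simpl; unfold Q_open.
    destruct (classic (exists c, C c /\ K c)) as [[c [Cc Kc]]|Hno].
    + apply (open_ext (fun y => Xs y /\ complement C y)); [apply open_setI; [apply HXsopen|exact HC]|].
      intros y; split.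
      * intros [Xy nC] [c' [Cc' E]]. apply nC. rewrite <- (piQ_inj c' y E Xy); auto.
      * intros H. split.
        -- apply NNPP; intros n; apply H. exists c; split; auto. rewrite !piQ_out; auto.
        -- intros Cy; apply H; exists y; auto.
    + apply (open_ext (complement C)); [exact HC|].
      intros y; split.
      * intros nC [c' [Cc' E]]. destruct (classic (Xs y)) as [Xy|nXy].
        -- apply nC; rewrite <- (piQ_inj c' y E Xy); auto.
        -- apply Hno; exists c'; split; auto. intros Xc. rewrite (piQ_out y nXy), (piQ_in c' Xc) in E. discriminate.
      * intros H Cy; apply H; exists y; auto.
  - intros [x|].
    + exists (proj1_sig x); apply piQ_some_proj.
    + exists k0; apply piQ_out; auto.
  - intros [x|].
    + intros F HF Hcov.
      destruct (Hcov (exist _ (proj1_sig x) (piQ_some_proj x))) as [U [FU HU]].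
      exists (U :: nil); split; [intros V [<-|[]]; auto|].
      intros z; exists U; split; [left; auto|].
      replace z with (exist (fun y => piQ y = Some x) (proj1_sig x) (piQ_some_proj x)); auto.
      apply sig_eq; simpl. symmetry. apply piQ_inj; [|apply (proj2_sig x)].
      transitivity (Some x); [exact (proj2_sig z)|symmetry; apply piQ_some_proj].
    + change (compact (subspace Y (fun y => piQ y = None))). replace (fun y => piQ y = None) with K; auto.
      apply set_ext; intros y; split.
      * intros Ky; apply piQ_out; auto.
      * intros E Xy; rewrite (piQ_in y Xy) in E; discriminate.
Qed.

Section CompHomeo.
Variables (U : set (Qsp)) (HU : open U) (HUn : U None).
Let AU := fun y => ~ U (piQ y).

Definition hmap (z : subspace Y AU) : subspace (Qsp) (complement U) :=
  exist _ (piQ (proj1_sig z)) (proj2_sig z).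

Lemma kproof (w : subspace (Qsp) (complement U)) : AU (sigQ k0 (proj1_sig w)).
Proof.
  unfold AU. rewrite piQ_sig; [apply (proj2_sig w)|]. intros E. apply (proj2_sig w). rewrite E; auto.
Qed.

Definition kmap (w : subspace (Qsp) (complement U)) : subspace Y AU :=
  exist _ (sigQ k0 (proj1_sig w)) (kproof w).

Lemma AU_X y : AU y -> Xs y.
Proof. intros H; apply NNPP; intros n; apply H; rewrite piQ_out; auto. Qed.

Lemma hmap_cont : continuous hmap.
Proof.
  apply continuous_into_sub. simpl.
  apply (continuous_comp (fun z : subspace Y AU => proj1_sig z) (piQ : Y -> Qsp)).
  - apply continuous_proj.
  - apply piQ_cont.
Qed.

Lemma kmap_cont : continuous kmap.
Proof.
  intros O [O' [HO' HOO']].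
  exists (fun q => U q \/ exists y, O' y /\ Xs y /\ piQ y = q). split.
  - unfold open; simpl; unfold Q_open.
    apply (open_ext (fun y => U (piQ y) \/ O' y)); [apply open_union2; auto|].
    intros y; split.
    + intros [Uy|Oy]; [left; auto|].
      destruct (classic (Xs y)) as [Xy|nXy].
      * right; exists y; auto.
      * left; rewrite piQ_out; auto.
    + intros [Uy|[y' [Oy' [Xy' E]]]]; [left; auto|].
      right. rewrite (piQ_inj y' y) in Oy'; auto.
      apply NNPP; intros n. rewrite (piQ_out y n) in E. rewrite (piQ_in y' Xy') in E; discriminate.
  - intros w. rewrite HOO'. simpl. destruct w as [[x|] hw]; simpl.
    + split.
      * intros Ox; right; exists (proj1_sig x); split; auto. split; [apply (proj2_sig x)|apply piQ_some_proj].
      * intros [Ux|[y' [Oy' [Xy' E]]]]; [contradiction|].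
        replace (proj1_sig x) with y'; auto.
        apply piQ_inj; [rewrite E, piQ_some_proj; auto|apply (proj2_sig x)].
    + exfalso; apply hw; auto.
Qed.

Lemma khmap z : kmap (hmap z) = z.
Proof. apply sig_eq; simpl. apply sig_piQ. apply AU_X; apply (proj2_sig z). Qed.

Lemma hkmap w : hmap (kmap w) = w.
Proof. apply sig_eq; destruct w as [q hq]; simpl. apply piQ_sig. intros E; subst q; apply hq; auto. Qed.
End CompHomeo.
End Final.

Lemma dir2 (H2 : forall p : bX, ~ lambdaP P X bX i p ->
     exists y : Y, complement Xs y /\ phi p = j y) : P Y.
Proof.
  destruct (classic (exists k0, K k0)) as [[k0 Hk0]|Hno].
  - destruct HP as [_ [_ [_ [Hinv Hw]]]].
    assert (HQ : tychonoff Qsp) by (apply (Q_tych k0 Hk0)).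
    apply (Hinv Y Qsp piQ HY HQ (piQ_perfect k0 Hk0)).
    apply (Hw Qsp None (fun U => open U /\ U None) HQ).
    + auto.
    + intros V HV HVn; exists V; split; auto.
    + intros U [HU HUn].
      set (AU := fun y => ~ U (piQ y)).
      apply (homeo_P P HP _ _ (hmap U) (kmap k0 U HUn));
        [apply subspace_tych; auto | apply subspace_tych; auto | apply hmap_cont
        | apply kmap_cont; auto | apply khmap | apply hkmap | ].
      apply (L2 H2 AU).
      * unfold closed. apply (open_ext (fun y => U (piQ y))); [exact HU|].
        intros y; unfold complement, AU; split; [tauto|apply NNPP].
      * intros y Hy; apply (AU_X U HUn y Hy).
  - apply (P_full P HP Y (fun _ => True) HY); auto.
    apply (L2 H2).
    + unfold closed; apply (open_ext (fun _ => False)); [apply open_empty|].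
      intros y; unfold complement; tauto.
    + intros y _. apply NNPP; intros n; apply Hno; exists y; auto.
Qed.

Lemma main_iff : in_EP P Y Xs <->
  (locally P (subspace Y Xs) /\
   forall p : bX, ~ lambdaP P (subspace Y Xs) bX i p ->
     exists y : Y, complement Xs y /\ phi p = j y).
Proof using P HP Y HY Xs Hdense Hrem bX i Hb zY j Hz phi Hphi Hext.
  split.
  - intros [_ [HPY _]]. split; [apply dir1_local; auto|apply dir1_lambda; auto].
  - intros [_ H2]. split; [auto|split; [apply dir2; auto|auto]].
Qed.
End Main.

Theorem lemma4p7 (P : property) (HP : compactness_like P)
  (Y : space) (HY : tychonoff Y) (Xs : set Y)
  (Hdense : dense Xs) (Hrem : compact (subspace Y (complement Xs)))
  (bX : space) (i : subspace Y Xs -> bX) (Hb : stone_cech (subspace Y Xs) bX i)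
  (zY : space) (j : Y -> zY) (Hz : compactification Y zY j)
  (phi : bX -> zY) (Hphi : continuous phi)
  (Hext : forall x : subspace Y Xs, phi (i x) = j (proj1_sig x)) :
  in_EP P Y Xs <->
  (locally P (subspace Y Xs) /\
   forall p : bX, ~ lambdaP P (subspace Y Xs) bX i p ->
     exists y : Y, complement Xs y /\ phi p = j y).
Proof.
  exact (main_iff P HP Y HY Xs Hdense Hrem bX i Hb zY j Hz phi Hphi Hext).
Qed.
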